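(* If $M,M'\in\mathrm{Mat}(2,\mathbb{Z})$ are conjugate via a matrix in $\mathrm{GL}(2,\mathbb{Z})$, then $\mathrm{mgcd}(M')=\mathrm{mgcd}(M)$. In particular, the matrix gcd is constant on the conjugacy classes of $\mathrm{GL}(2,\mathbb{Z})$.
   Context: For $M=\begin{pmatrix}a&b\\c&d\end{pmatrix}\in\mathrm{Mat}(2,\mathbb{Z})$, the matrix gcd is $\mathrm{mgcd}(M)=\gcd(b,c,d-a)$, taken as a non-negative integer, with $\mathrm{mgcd}(M)=0$ when $b=c=d-a=0$. *)

(* Defs.v *)
From mathcomp Require Import all_boot all_order all_algebra.
Set Implicit Arguments. Unset Strict Implicit. Unset Printing Implicit Defensive.
Import GRing.Theory Num.Theory.
Local Open Scope ring_scope.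

(* Matrix gcd of M = [[a,b],[c,d]] : gcd(b, c, d - a), non-negative;
   gcdz is non-negative and gcdz 0 0 = 0. *)
Definition mgcd (M : 'M[int]_2) : int :=
  gcdz (gcdz (M 0 1) (M 1 0)) (M 1 1 - M 0 0).

(* Main.v *)
Require Import Defs.
From mathcomp Require Import all_boot all_order all_algebra.
Import GRing.Theory Num.Theory.
Local Open Scope ring_scope.

Definition Dv (g : int) (N : 'M[int]_2) := forall i j, (g %| N i j)%Z.

Lemma Dv_mul g (Q N R : 'M[int]_2) : Dv g N -> Dv g (Q *m N *m R).
Proof.
move=> H i j; rewrite !mxE; apply: rpred_sum => l _.
rewrite !mxE big_distrl /=; apply: rpred_sum => k _.
by apply: dvdz_mulr; apply: dvdz_mull.
Qed.

Lemma Dv_mgcd g M : (g %| mgcd M)%Z <-> Dv g (M - (M 0 0)%:M).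
Proof.
rewrite /mgcd !dvdz_gcd; split.
  move=> /andP[/andP[h1 h2] h3] i j; rewrite !mxE.
  have o2 (k : 'I_2) : k = 0 \/ k = 1.
    by case: k => [[|[|//]]] ?; [left|right]; apply: val_inj.
  by case: (o2 i) => ->; case: (o2 j) => -> /=;
    rewrite ?subrr ?subr0 ?mulr0n ?mulr1n ?dvdz0.
move=> H; have h1 := H 0 1; have h2 := H 1 0; have h3 := H 1 1.
rewrite !mxE /= ?mulr0n ?mulr1n ?subr0 in h1 h2 h3.
by rewrite h1 h2 h3.
Qed.

Lemma conj_sub (M P : 'M[int]_2) (c : int) : P \in unitmx ->
  invmx P *m M *m P - c%:M = invmx P *m (M - c%:M) *m P.
Proof.
move=> uP; rewrite mulmxBr mulmxBl; congr (_ - _).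
by rewrite mul_mx_scalar -scalemxAl mulVmx // scalemx1.
Qed.

Lemma half {M M' P : 'M[int]_2} (g : int) :
  P \in unitmx -> M' = invmx P *m M *m P -> (g %| mgcd M)%Z -> (g %| mgcd M')%Z.
Proof.
move=> uP -> /Dv_mgcd H; apply/Dv_mgcd.
have H1 : Dv g (invmx P *m M *m P - (M 0 0)%:M).
  by rewrite conj_sub //; apply: Dv_mul.
set N := invmx P *m M *m P in H1 *; clearbody N.
have e0 : (N 0 0 - M 0 0) \in dvdz g.
  by have := H1 0 0; rewrite !mxE /= mulr1n.
have -> : N - (N 0 0)%:M = (N - (M 0 0)%:M) - (N 0 0 - M 0 0)%:M.
  by by rewrite (raddfB (@scalar_mx int 2)) opprB addrA subrK.
move=> i j; rewrite !mxE; apply: rpredB.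
  by have := H1 i j; rewrite !mxE.
by case: (i == j) => /=; rewrite ?mulr1n ?mulr0n ?dvdz0.
Qed.

(* P \in unitmx over int means det P is a unit of int (= ±1), i.e. P ∈ GL(2,Z). *)
Theorem lemma29 (M M' P : 'M[int]_2) :
  P \in unitmx -> M' = invmx P *m M *m P -> mgcd M' = mgcd M.
Proof.
move=> uP eM.
have eM2 : M = invmx (invmx P) *m M' *m invmx P.
  rewrite invmxK eM !mulmxA mulmxV // mul1mx -mulmxA mulmxV // mulmx1 //.
have d1 := half _ uP eM (dvdzz (mgcd M)).
have d2 := half _ (etrans (unitmx_inv P) uP) eM2 (dvdzz (mgcd M')).
rewrite /mgcd /gcdz in d1 d2 *; congr Posz; apply/eqP.
by rewrite eqn_dvd; apply/andP; split; [exact: d2 | exact: d1].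
Qed.
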